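(* For all disjoint subsets $X_i, X_j \subseteq A$: if $X_i \leadsto X_j$, then for every $S' \subseteq S$, $$\Psi_{X_i \cup X_j}(S') = (\Psi_{X_i} \oslash \Psi_{X_j})\big(\Omega_{X_i \cup X_j}(S')\big).$$
   Context: Let $A$ be a finite set of agents. For each $a \in A$ let $S_a$ be a nonempty finite set, and $S = \prod_{a \in A} S_a$ the set of states. For each $a \in A$ let $\to_a \subseteq S \times S$ be a relation that is either empty or left-total, such that whenever $s \to_a s'$, either $s = s'$ or $s$ and $s'$ differ only in the $a$-component. For $X \subseteq A$ let $\to_X = \bigcup_{a \in X} \to_a$ and $\to_X^*$ its reflexive-transitive closure; for $T \subseteq S$, $(T \to_X) = \{ t' : \exists t \in T,\ t \to_X t'\}$. Orbit operator: $\Omega_X(S') = \{ s' : \exists s \in S',\ s \to_X^* s'\}$. Equilibria operator: $\Psi_X(S') = \{ s \in \Omega_X(S') : \forall s' \in S,\ s \to_X^* s' \implies s' \to_X^* s \}$. $M$-relation: $X \leadsto Y$ iff for every $S' \subseteq S$, with $T = \Psi_X(\Psi_{X \cup Y}(S'))$, one has $(T \to_Y) \subseteq T$. Composition operator: for $X, Y \subseteq A$, let $\rightleftharpoons_X$ be the equivalence relation on $S$ given by $s \rightleftharpoons_X s'$ iff $s \to_X^* s'$ and $s' \to_X^* s$; $[s]_X$ denotes the class of $s$ and $[S']_X = \{[s]_X : s \in S'\}$. On classes define $c \Rightarrow_Y c'$ iff there exist $s \in c$, $s' \in c'$ with $s \to_Y s'$, and let $\Rightarrow_Y^*$ be its reflexive-transitive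 closure. For $S'' \subseteq S$ let $[\widetilde{\Psi}_Y]_X(S'') = \{ e \in [S'']_X : \{e' : e \Rightarrow_Y^* e'\} \subseteq [S'']_X \text{ and } \forall e' \in [S]_X,\ e \Rightarrow_Y^* e' \implies e' \Rightarrow_Y^* e \}$, and for a set $E$ of subsets of $S$ let $\mathsf{Flatten}(E) = \bigcup_{e \in E} e$. Then $(\Psi_X \oslash \Psi_Y)(S'') = \mathsf{Flatten}\big([\widetilde{\Psi}_Y]_X(\Psi_X(S''))\big)$. *)

(* Defs.v *)
From HB Require Import structures.
From mathcomp Require Import all_boot.
Set Implicit Arguments. Unset Strict Implicit. Unset Printing Implicit Defensive.

(* Agents: a finite type A; local state spaces Sa a (finite types);
   global states S = product over agents = dependent finite functions. *)
Notation state A Sa := {dffun forall a : A, Sa a}.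

Section Defs.
Variables (A : finType) (Sa : A -> finType).
Variable step : A -> rel (state A Sa).

Local Notation S := (state A Sa).

Definition stepX (X : {set A}) : rel S := fun s t => [exists a in X, step a s t].

Definition reach (X : {set A}) : rel S := connect (stepX X).

Definition Omega (X : {set A}) (S' : {set S}) : {set S} :=
  [set t | [exists s in S', reach X s t]].

Definition Psi (X : {set A}) (S' : {set S}) : {set S} :=
  [set s in Omega X S' | [forall t, reach X s t ==> reach X t s]].

Definition leadsto (X Y : {set A}) : Prop :=
  forall S' : {set S},
    let T := Psi X (Psi (X :|: Y) S') in
    forall t t', t \in T -> stepX Y t t' -> t' \in T.

Definition cls (X : {set A}) (s : S) : {set S} :=
  [set t | reach X s t && reach X t s].

Definition clsset (X : {set A}) (S' : {set S}) : {set {set S}} :=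
  [set cls X s | s in S'].

Definition cstep (X Y : {set A}) : rel {set S} := fun c c' =>
  [&& c \in clsset X setT, c' \in clsset X setT &
      [exists s in c, exists s' in c', stepX Y s s']].

Definition creach (X Y : {set A}) : rel {set S} := connect (cstep X Y).

Definition PsiTilde (Y X : {set A}) (S'' : {set S}) : {set {set S}} :=
  [set e in clsset X S'' |
     [forall e', creach X Y e e' ==> (e' \in clsset X S'')] &&
     [forall e' in clsset X setT, creach X Y e e' ==> creach X Y e' e]].

Definition Flatten (E : {set {set S}}) : {set S} := \bigcup_(e in E) e.

Definition compose (X Y : {set A}) (S'' : {set S}) : {set S} :=
  Flatten (PsiTilde Y X (Psi X S'')).

End Defs.

(* Main.v *)
Require Import Defs.
From HB Require Import structures.
From mathcomp Require Import all_boot.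

Set Implicit Arguments. Unset Strict Implicit. Unset Printing Implicit Defensive.

Section Aux.
Variables (A : finType) (Sa : A -> finType) (step : A -> rel (state A Sa)).
Local Notation S := (state A Sa).
Implicit Types X Y : {set A}.

Lemma conn_inv (T : finType) (e : rel T) (P : T -> Prop) x y :
  (forall u v, P u -> e u v -> P v) -> connect e x y -> P x -> P y.
Proof.
move=> H /connectP [p pth ->]; elim: p x pth => //= v p IH x /andP [exv pv] Px.
apply: IH pv _; exact: H Px exv.
Qed.

Lemma reach_sub X (Z : {set A}) (s t : S) : X \subset Z -> reach step X s t -> reach step Z s t.
Proof.
move=> sXZ; apply: connect_sub => u v /existsP [a /andP [aX h]].
apply: connect1; apply/existsP; exists a; by rewrite (subsetP sXZ a aX) h.
Qed.

Lemma stepXU X Y (s t : S) :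
  stepX step (X :|: Y) s t = stepX step X s t || stepX step Y s t.
Proof.
rewrite /stepX; apply/existsP/orP.
  move=> [a /andP [/setUP [aX|aY] h]]; [left|right]; apply/existsP; exists a;
  by rewrite ?aX ?aY h.
move=> [] /existsP [a /andP [aI h]]; exists a; by rewrite inE aI h ?orbT.
Qed.

Lemma stepY_Z X Y (s t : S) : stepX step Y s t -> reach step (X :|: Y) s t.
Proof. by move=> h; apply: connect1; rewrite stepXU h orbT. Qed.

Lemma reach_trans X (x y z : S) : reach step X x y -> reach step X y z -> reach step X x z.
Proof. exact: connect_trans. Qed.

Lemma cls_eq X (x y : S) : reach step X x y -> reach step X y x ->
  cls step X x = cls step X y.
Proof.
move=> xy yx; apply/setP => z; rewrite !inE; apply/andP/andP => [[a b]|[a b]]; split.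
- exact: reach_trans yx a.
- exact: reach_trans b xy.
- exact: reach_trans xy a.
- exact: reach_trans b yx.
Qed.

Lemma cls_self X (x : S) : x \in cls step X x.
Proof. by rewrite inE /reach connect0. Qed.

Lemma same_cls X (c : {set S}) x y : c \in clsset step X setT -> x \in c -> y \in c ->
  reach step X x y.
Proof.
move=> /imsetP [w _ ->]; rewrite !inE => /andP [_ xw] /andP [wy _].
exact: reach_trans xw wy.
Qed.

Lemma exists_rec X (s : S) :
  exists t, reach step X s t && [forall u, reach step X t u ==> reach step X u t].
Proof.
pose f (t : S) := #|[set u | reach step X t u]|.
have [t st tmin] := @arg_minnP _ s (reach step X s) f (connect0 _ _).
exists t; rewrite st; apply/forallP => u; apply/implyP => tu.
have sub : [set v | reach step X u v] \subset [set v | reach step X t v].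
  by apply/subsetP => v; rewrite !inE => uv; exact: reach_trans tu uv.
have E : [set v | reach step X u v] = [set v | reach step X t v].
  by apply/eqP; rewrite eqEcard sub /=; exact: tmin (reach_trans st tu).
have : t \in [set v | reach step X t v] by rewrite inE /reach connect0.
by rewrite -E inE.
Qed.

Lemma G X Y (c c' : {set S}) x y : creach step X Y c c' -> c \in clsset step X setT ->
  x \in c -> y \in c' -> reach step (X :|: Y) x y.
Proof.
move=> /connectP [p pth ->]; elim: p c x pth => /= [|d p IH] c x.
  move=> _ cc xc yc; apply: reach_sub (subsetUl _ _) _; exact: same_cls cc xc yc.
move=> /andP [/and3P [cc dc /existsP [s1 /andP [s1c /existsP [s2 /andP [s2d h]]]]] pth] _ xc yl.
apply: reach_trans (reach_sub (subsetUl _ _) (same_cls cc xc s1c)) _.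
apply: reach_trans (stepY_Z X h) _.
exact: IH pth dc s2d yl.
Qed.

End Aux.

Theorem lemma2 (A : finType) (Sa : A -> finType)
  (HSa : forall a : A, 0 < #|Sa a|)
  (step : A -> rel {dffun forall a : A, Sa a})
  (Hstep_tot : forall a : A,
      (forall s t, ~~ step a s t) \/ (forall s, exists t, step a s t))
  (Hstep_loc : forall (a : A) s t, step a s t ->
      s = t \/ (forall b : A, b != a -> s b = t b))
  (Xi Xj : {set A}) :
  [disjoint Xi & Xj] ->
  leadsto step Xi Xj ->
  forall S' : {set {dffun forall a : A, Sa a}},
    Psi step (Xi :|: Xj) S' =
    compose step Xi Xj (Omega step (Xi :|: Xj) S').
Proof.
move=> _ Hlt S'.
set Z := Xi :|: Xj.
set R := Psi step Z S'.
have sXZ : Xi \subset Z := subsetUl _ _.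
have R1 : forall u v, u \in R -> reach step Z u v -> v \in R.
  move=> u v; rewrite !inE => /andP [/existsP [s0 /andP [s0S s0u]] /forallP rec] uv.
  apply/andP; split.
    by apply/existsP; exists s0; rewrite s0S (reach_trans s0u uv).
  apply/forallP => w; apply/implyP => vw.
  have := implyP (rec w) (reach_trans uv vw) => wu; exact: reach_trans wu uv.
have R2 : forall u v, u \in R -> reach step Z u v -> reach step Z v u.
  by move=> u v; rewrite inE => /andP [_ /forallP rec] uv; exact: implyP (rec v) uv.
have R3 : forall u v, u \in R -> reach step Xi u v -> reach step Xi v u.
  move=> u v uR.
  set T := Psi step Xi R.
  have TX : forall t t', t \in T -> stepX step Xi t t' -> t' \in T.
    move=> t t'; rewrite !inE => /andP [/existsP [r /andP [rR rt]] /forallP rec] h.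
    apply/andP; split.
      by apply/existsP; exists r; rewrite rR (reach_trans rt (connect1 h)).
    apply/forallP => w; apply/implyP => t'w.
    have := implyP (rec w) (reach_trans (connect1 h) t'w) => wt.
    exact: reach_trans wt (connect1 h).
  have TZ : forall t t', t \in T -> stepX step Z t t' -> t' \in T.
    move=> t t' tT; rewrite stepXU => /orP [h|h]; first exact: TX tT h.
    exact: (Hlt S' t t' tT h).
  have [t /andP [ut trec]] := exists_rec step Xi u.
  have tT : t \in T.
    rewrite inE trec andbT inE; apply/existsP; exists u; by rewrite uR ut.
  have tu : reach step Z t u by apply: R2 uR (reach_sub sXZ ut).
  have uT : u \in T := conn_inv TZ tu tT.
  by move: uT; rewrite inE => /andP [_ /forallP rec] uv; exact: implyP (rec v) uv.
have RinP : forall u, u \in R -> u \in Psi step Xi (Omega step Z S').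
  move=> u uR; rewrite inE; apply/andP; split.
    rewrite inE; apply/existsP; exists u; rewrite /reach connect0 andbT.
    by move: uR; rewrite inE => /andP [].
  by apply/forallP => v; apply/implyP; exact: R3.
have F : forall u v, u \in R -> reach step Z u v ->
    creach step Xi Xj (cls step Xi u) (cls step Xi v).
  move=> u v uR uv.
  pose Q y := (y \in R) /\ creach step Xi Xj (cls step Xi u) (cls step Xi y).
  suff [] : Q v by [].
  apply: (conn_inv (e := stepX step Z) (P := Q)) uv _; last by split => //; exact: connect0.
  move=> y y' [yR cy] h; have y'R : y' \in R := R1 _ _ yR (connect1 h).
  split => //; move: h; rewrite stepXU => /orP [h|h].
    rewrite -(cls_eq (connect1 h)) //; exact: R3 yR (connect1 h).
  apply: connect_trans cy (connect1 _).
  rewrite /cstep !imset_f ?inE //=; apply/existsP; exists y; rewrite cls_self /=.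
  by apply/existsP; exists y'; rewrite cls_self h.
apply/setP => s; apply/idP/idP => [sR|].
  rewrite /compose /Flatten; apply/bigcupP; exists (cls step Xi s); last exact: cls_self.
  have C : forall e', creach step Xi Xj (cls step Xi s) e' ->
      exists2 u, u \in R & e' = cls step Xi u.
    move=> e' se'; apply: (conn_inv (e := cstep step Xi Xj) (P := fun c => exists2 u, u \in R & c = cls step Xi u)) se' _; last by exists s.
    move=> c c' [u uR ->] /and3P [_ /imsetP [w _ ->]
       /existsP [s1 /andP [s1c /existsP [s2 /andP [s2d h]]]]].
    move: s1c; rewrite inE => /andP [us1 _].
    have s2R : s2 \in R := R1 _ _ (R1 _ _ uR (reach_sub sXZ us1)) (stepY_Z Xi h).
    exists s2 => //; move: s2d; rewrite inE => /andP [ws2 s2w]; exact: cls_eq.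
  rewrite inE; apply/andP; split; first by apply: imset_f; exact: RinP.
  apply/andP; split.
    apply/forallP => e'; apply/implyP => /C [u uR ->]; apply: imset_f; exact: RinP.
  apply/forallP => e'; apply/implyP => _; apply/implyP => se'.
  have [u uR eu] := C _ se'; subst e'.
  apply: F uR (R2 _ _ sR _).
  by apply: G se' _ (cls_self _ _ _) (cls_self _ _ _); apply: imset_f.
rewrite /compose /Flatten => /bigcupP [e].
rewrite inE => /andP [/imsetP [p pP ->] /andP [/forallP H1 /forallP H2]] sp.
have ps : cls step Xi p = cls step Xi s by move: sp; rewrite inE => /andP [a b]; exact: cls_eq.
rewrite ps in H1 H2.
have srec : forall y, creach step Xi Xj (cls step Xi s) (cls step Xi y) ->
    forall v, reach step Xi y v -> reach step Xi v y.
  move=> y /(implyP (H1 _)) /imsetP [q].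
  rewrite inE => /andP [_ /forallP qrec] E v yv.
  have : y \in cls step Xi q by rewrite -E cls_self.
  rewrite inE => /andP [qy yq].
  exact: reach_trans (implyP (qrec v) (reach_trans qy yv)) qy.
rewrite inE; apply/andP; split.
  move: pP; rewrite inE => /andP [+ _]; rewrite inE => /existsP [q /andP [+ qp]].
  rewrite inE => /existsP [s0 /andP [s0S s0q]].
  move: sp; rewrite inE => /andP [ps' _].
  rewrite inE; apply/existsP; exists s0; rewrite s0S /=.
  exact: reach_trans s0q (reach_sub sXZ (reach_trans qp ps')).
apply/forallP => t; apply/implyP => st.
have ct : creach step Xi Xj (cls step Xi s) (cls step Xi t).
  apply: (conn_inv (e := stepX step Z) (P := fun y => creach step Xi Xj (cls step Xi s) (cls step Xi y))) st _; last exact: connect0.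
  move=> y y' cy; rewrite stepXU => /orP [h|h].
    by rewrite -(cls_eq (connect1 h)) //; exact: srec cy _ (connect1 h).
  apply: connect_trans cy (connect1 _).
  rewrite /cstep !imset_f ?inE //=; apply/existsP; exists y; rewrite cls_self /=.
  by apply/existsP; exists y'; rewrite cls_self h.
have := implyP (implyP (H2 (cls step Xi t)) (imset_f _ (in_setT t))) ct => ts.
by apply: G ts (imset_f _ (in_setT t)) (cls_self _ _ _) (cls_self _ _ _).
Qed.
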